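(* Let $(\mathcal S,\mathcal C,\mathcal R,\mathcal K)$ be a deterministic reaction network system with species $X_1,\dots,X_d$, modeled by $\frac{d}{dt}x(t)=f(x(t))$, and let $PS=\{x\in\mathbb R^d_{>0}: f(x)=0\}$. Let $\theta,\mu>0$ and suppose there exists $x^*\in PS$ with $x^*_1=\mu/\theta$. Then the basic ACR network system $Z+X_1\xrightarrow{\theta}2Z$, $Z\xrightarrow{\mu}X_1$ (with mass-action kinetics, $Z$ a new species not in the given network) is a mass-action ACR controller for $(\mathcal S,\mathcal C,\mathcal R,\mathcal K)$, and the controlled system admits a positive steady state.
   Context: The basic ACR network system with mass-action kinetics has equations $x_1'=-z(\theta x_1-\mu)$, $z'=z(\theta x_1-\mu)$. The controlled (union) system has equations $x_1'=f_1(x)-z(\theta x_1-\mu)$, $z'=z(\theta x_1-\mu)$, and $x_i'=f_i(x)$ for $i\ge 2$. A deterministic system is an ACR system if it admits a positive steady state and some species has the same value at every positive steady state (an ACR species). An ACR network system $(\hat{\mathcal S},\hat{\mathcal C},\hat{\mathcal R},\hat{\mathcal K})$ with $X_1\in\mathcal S\cap\hat{\mathcal S}$ and $\hat{\mathcal S}\setminus\mathcal S\ne\emptyset$ is called an ACR controller for $(\mathcal S,\mathcal C,\mathcal R,\mathcal K)$ if the union system (right-hand sides added on shared species) is an ACR network system with $X_1$ as an ACR species; it is a mass-action ACR controller if it is a mass-action system. *)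

(* Defs.v *)
From mathcomp Require Import all_boot all_order all_algebra.
From mathcomp Require Import reals.
Set Implicit Arguments. Unset Strict Implicit. Unset Printing Implicit Defensive.
Import Order.TTheory GRing.Theory Num.Theory.
Local Open Scope ring_scope.

Section Defs.
Variable R : realType.

Definition vfield (S : finType) := (S -> R) -> (S -> R).

Definition pos_steady (S : finType) (f : vfield S) (x : S -> R) : Prop :=
  (forall s, 0 < x s) /\ (forall s, f x s = 0).

Definition ACR_species (S : finType) (f : vfield S) (s : S) : Prop :=
  forall x y, pos_steady f x -> pos_steady f y -> x s = y s.

Definition ACR_system (S : finType) (f : vfield S) : Prop :=
  (exists x, pos_steady f x) /\ (exists s, ACR_species f s).

Record reaction (S : finType) := Reaction {
  rsrc : S -> nat; rprd : S -> nat; rrate : R }.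

Definition mass_action (S : finType) (rs : seq (reaction S)) : vfield S :=
  fun x s => \sum_(r <- rs)
     rrate r * (\prod_(s' : S) x s' ^+ rsrc r s') *
     ((rprd r s)%:R - (rsrc r s)%:R).

(* Union of the given system f (species 'I_d.+1, X_1 = ord0) with a
   controller g on species T, embedded in the union species option 'I_d.+1
   via emb (None = a new species not in the original network). *)
Definition union_vf (d : nat) (T : finType) (f : vfield 'I_d.+1)
  (g : vfield T) (emb : T -> option 'I_d.+1) : vfield (option 'I_d.+1) :=
  fun x s =>
    (match s with Some i => f (fun j => x (Some j)) i | None => 0 end) +
    \sum_(c : T | emb c == s) g (fun c' => x (emb c')) c.

Definition ACR_controller (d : nat) (T : finType) (f : vfield 'I_d.+1)
  (g : vfield T) (emb : T -> option 'I_d.+1) : Prop :=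
  injective emb /\
  (exists c, emb c = Some ord0) /\
  (exists c, emb c = None) /\
  ACR_system g /\
  ACR_system (union_vf f g emb) /\
  ACR_species (union_vf f g emb) (Some ord0).

Definition mass_action_ACR_controller (d : nat) (T : finType)
  (f : vfield 'I_d.+1) (rs : seq (reaction T))
  (emb : T -> option 'I_d.+1) : Prop :=
  ACR_controller f (mass_action rs) emb.

(* Basic ACR network on species bool: true = X_1, false = Z.
   Z + X_1 --theta--> 2Z,   Z --mu--> X_1. *)
Definition basic_network (theta mu : R) : seq (reaction bool) :=
  [:: Reaction (fun _ => 1%N) (fun s => if s then 0%N else 2%N) theta;
      Reaction (fun s => if s then 0%N else 1%N) (fun s => if s then 1%N else 0%N) mu].

End Defs.

Definition basic_emb (d : nat) (c : bool) : option 'I_d.+1 :=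
  if c then Some ord0 else None.

(* Main.v *)
Require Import Defs.
From mathcomp Require Import all_boot all_order all_algebra.
From mathcomp Require Import reals.
From mathcomp Require Import ring lra.
Import Order.TTheory GRing.Theory Num.Theory.
Local Open Scope ring_scope.

Lemma ma_basic (R : realType) (theta mu : R) (x : bool -> R) (s : bool) :
  mass_action (basic_network theta mu) x s =
  (if s then -1 else 1) * (x false * (theta * x true - mu)).
Proof.
rewrite /mass_action big_cons big_cons big_nil /= !big_bool /=.
by case: s => /=; rewrite ?expr1 ?expr0; ring.
Qed.

Lemma union_Some (R : realType) (d : nat) (f : vfield R 'I_d.+1) (theta mu : R)
  (x : option 'I_d.+1 -> R) (i : 'I_d.+1) :
  union_vf f (mass_action (basic_network theta mu)) (@basic_emb d) x (Some i) =
  f (fun j => x (Some j)) i +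
  (if i == ord0 then - (x None * (theta * x (Some ord0) - mu)) else 0).
Proof.
rewrite /union_vf big_mkcond big_bool /= /basic_emb /= !ma_basic /=.
have -> : (Some ord0 == Some i) = (i == ord0) by rewrite (inj_eq (@Some_inj _)) eq_sym.
by case: (i == ord0); ring.
Qed.

Lemma union_None (R : realType) (d : nat) (f : vfield R 'I_d.+1) (theta mu : R)
  (x : option 'I_d.+1 -> R) :
  union_vf f (mass_action (basic_network theta mu)) (@basic_emb d) x None =
  x None * (theta * x (Some ord0) - mu).
Proof.
rewrite /union_vf big_mkcond big_bool /= /basic_emb /= !ma_basic /=.
ring.
Qed.

Theorem mainTheorem2 (R : realType) (d : nat)
  (f : vfield R 'I_d.+1) (theta mu : R) :
  0 < theta -> 0 < mu ->
  (exists xs : 'I_d.+1 -> R, pos_steady f xs /\ xs ord0 = mu / theta) ->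
  mass_action_ACR_controller f (basic_network theta mu) (@basic_emb d) /\
  (exists x, pos_steady (union_vf f (mass_action (basic_network theta mu)) (@basic_emb d)) x).
Proof.
move=> th0 mu0 [xs [[xpos xf] x0]].
have th1 : theta != 0 by rewrite gt_eqF.
have key : theta * (mu / theta) - mu = 0 by rewrite mulrC divfK // subrr.
pose xu := fun o : option 'I_d.+1 => match o with Some j => xs j | None => 1 end.
have Hxu : pos_steady (union_vf f (mass_action (basic_network theta mu)) (@basic_emb d)) xu.
  split; first by case=> [j|] /=; [exact: xpos | exact: ltr01].
  case=> [i|].
    rewrite union_Some /= x0 key mulr0 oppr0.
    have -> : (fun j => xs j) = xs by [].
    by rewrite xf; case: (i == ord0); rewrite addr0.
  by rewrite union_None /= x0 key mulr0.
have acr : ACR_species (union_vf f (mass_action (basic_network theta mu)) (@basic_emb d)) (Some ord0).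
  have H : forall x, pos_steady (union_vf f (mass_action (basic_network theta mu)) (@basic_emb d)) x ->
      x (Some ord0) = mu / theta.
    move=> x [xp xz].
    have := xz None; rewrite union_None => /eqP; rewrite mulf_eq0 gt_eqF //= subr_eq0 => /eqP E.
    by rewrite -E mulrC mulKf.
  by move=> x y Hx Hy; rewrite (H _ Hx) (H _ Hy).
split; last by exists xu.
split.
  by move=> [] [] //=.
split; first by exists true.
split; first by exists false.
split.
  have H : forall x, pos_steady (mass_action (basic_network theta mu)) x -> x true = mu / theta.
    move=> x [xp xz].
    have := xz false; rewrite ma_basic mul1r => /eqP; rewrite mulf_eq0 gt_eqF //= subr_eq0 => /eqP E.
    by rewrite -E mulrC mulKf.
  split; last by exists true => x y Hx Hy; rewrite (H _ Hx) (H _ Hy).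
  exists (fun b => if b then mu / theta else 1); split.
    by case=> /=; [rewrite divr_gt0 | exact: ltr01].
  by move=> s; rewrite ma_basic /= key !mulr0.
split; last exact: acr.
split; first by exists xu.
by exists (Some ord0).
Qed.
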